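(* Let $K\subseteq\mathbb R^n$ ($n\ge1$) be a semialgebraic set with nonempty interior and let $d>2$ be even. Then there is no polynomial $\varphi$ in the coefficients of $f\in\mathbb R[x]_{\le d}$ with $\varphi(f)>0$ for all $f\in\operatorname{int}P_d(K)$ and $\varphi(f)=0$ for all $f\in\partial P_d(K)$. Consequently $-\log\varphi(f)$ cannot be a barrier for $P_d(K)$ with $\varphi$ polynomial, and $P_d(K)$ is not representable by a linear matrix inequality (no affine-linear symmetric matrix pencil $L(f)$ in the coefficients of $f$ with $P_d(K)=\{f:L(f)\succeq0\}$ and $L(f)\succ0$ on $\operatorname{int}P_d(K)$).
   Context: $\mathbb R[x]_{\le d}$: real polynomials in $x=(x_1,\dots,x_n)$ of degree $\le d$, with Euclidean topology on coefficients; $P_d(K)=\{f\in\mathbb R[x]_{\le d}: f(x)\ge0\ \forall x\in K\}$. *)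

(* Defs.v *)
From Stdlib Require Import Reals Lra Lia List Arith.
Import ListNotations.
Open Scope R_scope.

(* Points of R^m are represented as functions nat -> R; only the
   coordinates 0..m-1 are meaningful (all sets/functions below that
   live on R^m depend only on those coordinates). *)

Fixpoint rsum (n : nat) (f : nat -> R) : R :=
  match n with O => 0 | S k => rsum k f + f k end.

(* a monomial is an exponent list a = [a_0; ...; a_{k-1}] : x_0^a_0 ... x_{k-1}^a_{k-1} *)
Definition mon_eval (a : list nat) (x : nat -> R) : R :=
  fold_right Rmult 1 (map (fun i => x i ^ nth i a O) (seq 0 (length a))).

Definition mpoly := list (R * list nat).

Definition mp_eval (p : mpoly) (x : nat -> R) : R :=
  fold_right Rplus 0 (map (fun t => fst t * mon_eval (snd t) x) p).

Definition mp_in_vars (m : nat) (p : mpoly) : Prop :=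
  Forall (fun t => (length (snd t) <= m)%nat) p.

Inductive sa_formula : Type :=
| SA_pos  : mpoly -> sa_formula
| SA_zero : mpoly -> sa_formula
| SA_and  : sa_formula -> sa_formula -> sa_formula
| SA_or   : sa_formula -> sa_formula -> sa_formula
| SA_not  : sa_formula -> sa_formula.

Fixpoint sa_holds (F : sa_formula) (x : nat -> R) : Prop :=
  match F with
  | SA_pos p => 0 < mp_eval p x
  | SA_zero p => mp_eval p x = 0
  | SA_and F G => sa_holds F x /\ sa_holds G x
  | SA_or F G => sa_holds F x \/ sa_holds G x
  | SA_not F => ~ sa_holds F x
  end.

Fixpoint sa_in_vars (m : nat) (F : sa_formula) : Prop :=
  match F with
  | SA_pos p | SA_zero p => mp_in_vars m p
  | SA_and F G | SA_or F G => sa_in_vars m F /\ sa_in_vars m G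
  | SA_not F => sa_in_vars m F
  end.

Definition semialgebraic (n : nat) (K : (nat -> R) -> Prop) : Prop :=
  exists F : sa_formula, sa_in_vars n F /\ forall x, K x <-> sa_holds F x.

(* ---------- topology of R^m (sup-norm balls, i.e. Euclidean topology) ---------- *)
Definition ballR (m : nat) (c : nat -> R) (r : R) (y : nat -> R) : Prop :=
  forall i, (i < m)%nat -> Rabs (y i - c i) < r.

Definition interiorR (m : nat) (S : (nat -> R) -> Prop) (c : nat -> R) : Prop :=
  exists r, 0 < r /\ forall y, ballR m c r y -> S y.

Definition closureR (m : nat) (S : (nat -> R) -> Prop) (c : nat -> R) : Prop :=
  forall r, 0 < r -> exists y, ballR m c r y /\ S y.

Definition boundaryR (m : nat) (S : (nat -> R) -> Prop) (c : nat -> R) : Prop :=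
  closureR m S c /\ ~ interiorR m S c.

(* all exponent vectors of length n with total degree <= d *)
Fixpoint mons (n d : nat) : list (list nat) :=
  match n with
  | O => [ [] ]
  | S n' => flat_map (fun k => map (cons k) (mons n' (d - k))) (seq 0 (S d))
  end.

Definition dimP (n d : nat) : nat := length (mons n d).

(* the polynomial with coefficient vector c (in the monomial basis mons n d),
   evaluated at x *)
Definition poly_of_coefs (n d : nat) (c : nat -> R) (x : nat -> R) : R :=
  rsum (dimP n d) (fun j => c j * mon_eval (nth j (mons n d) []) x).

Definition Pd (n d : nat) (K : (nat -> R) -> Prop) (c : nat -> R) : Prop :=
  forall x, K x -> 0 <= poly_of_coefs n d c x.

Definition is_barrier (m : nat) (S : (nat -> R) -> Prop) (F : (nat -> R) -> R) : Prop :=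
  forall c, boundaryR m S c ->
    forall M, exists r, 0 < r /\
      forall y, ballR m c r y -> interiorR m S y -> M < F y.

(* matrices of size k: functions nat -> nat -> R, entries i,j < k meaningful *)
Definition quad_form (k : nat) (M : nat -> nat -> R) (v : nat -> R) : R :=
  rsum k (fun i => rsum k (fun j => v i * M i j * v j)).

Definition psd (k : nat) (M : nat -> nat -> R) : Prop :=
  forall v, 0 <= quad_form k M v.

Definition pd (k : nat) (M : nat -> nat -> R) : Prop :=
  forall v, (exists i, (i < k)%nat /\ v i <> 0) -> 0 < quad_form k M v.

Definition pencil (N : nat) (A : nat -> nat -> nat -> R) (c : nat -> R) : nat -> nat -> R :=
  fun i j => A O i j + rsum N (fun l => c l * A (S l) i j).

Definition LMI_representable (N : nat) (S : (nat -> R) -> Prop) : Prop :=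
  exists (k : nat) (A : nat -> nat -> nat -> R),
    (forall l i j, (i < k)%nat -> (j < k)%nat -> A l i j = A l j i) /\
    (forall c, S c <-> psd k (pencil N A c)) /\
    (forall c, interiorR N S c -> pd k (pencil N A c)).

(* Main.v *)
Require Import Defs.
From Stdlib Require Import Reals Arith Lra Lia Psatz List Classical ClassicalEpsilon FunctionalExtensionality.
From HB Require Import structures.
From mathcomp Require all_boot all_algebra.
Import ListNotations.
Open Scope R_scope.

Lemma rsum_ext n f g : (forall i, (i < n)%nat -> f i = g i) -> rsum n f = rsum n g.
Proof. induction n; simpl; intros H; auto. rewrite IHn by (intros; apply H; lia). rewrite (H n) by lia. auto. Qed.

Lemma rsum_plus n f g : rsum n (fun i => f i + g i) = rsum n f + rsum n g.
Proof. induction n; simpl; [lra|]. rewrite IHn. lra. Qed.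

Lemma rsum_scal n c f : rsum n (fun i => c * f i) = c * rsum n f.
Proof. induction n; simpl; [lra|]. rewrite IHn. lra. Qed.

Lemma rsum_minus n f g : rsum n (fun i => f i - g i) = rsum n f - rsum n g.
Proof. induction n; simpl; [lra|]. rewrite IHn. lra. Qed.

Lemma rsum_zero n : rsum n (fun _ => 0) = 0.
Proof. induction n; simpl; [lra|]. rewrite IHn. lra. Qed.

Lemma rsum_le n f g : (forall i, (i < n)%nat -> f i <= g i) -> rsum n f <= rsum n g.
Proof. induction n; simpl; intros H; [lra|]. assert (f n <= g n) by (apply H; lia).
 assert (rsum n f <= rsum n g) by (apply IHn; intros; apply H; lia). lra. Qed.

Lemma rsum_nonneg n f : (forall i, (i < n)%nat -> 0 <= f i) -> 0 <= rsum n f.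
Proof. intros H. rewrite <- (rsum_zero n). apply rsum_le. auto. Qed.

Lemma rsum_term_le n f i : (forall j, (j < n)%nat -> 0 <= f j) -> (i < n)%nat -> f i <= rsum n f.
Proof. induction n; simpl; intros H Hi; [lia|].
 destruct (Nat.eq_dec i n) as [->|].
 - assert (0 <= rsum n f) by (apply rsum_nonneg; intros; apply H; lia). lra.
 - assert (f i <= rsum n f) by (apply IHn; [intros; apply H; lia| lia]).
   assert (0 <= f n) by (apply H; lia). lra. Qed.

Lemma rsum_abs n f : Rabs (rsum n f) <= rsum n (fun i => Rabs (f i)).
Proof. induction n; simpl. rewrite Rabs_R0; lra.
 eapply Rle_trans; [apply Rabs_triang|]. lra. Qed.

Lemma rsum_const n c : rsum n (fun _ => c) = INR n * c.
Proof. induction n; simpl rsum; [simpl; lra|]. rewrite IHn, S_INR. lra. Qed.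

Lemma rsum_single n j g : (j < n)%nat -> rsum n (fun i => if Nat.eqb i j then g i else 0) = g j.
Proof. induction n; simpl; intros Hj; [lia|].
 destruct (Nat.eq_dec j n) as [->|Hne].
 - rewrite Nat.eqb_refl. rewrite (rsum_ext n _ (fun _ => 0)). rewrite rsum_zero; lra.
   intros i Hi. destruct (Nat.eqb_spec i n); [lia|auto].
 - rewrite IHn by lia. destruct (Nat.eqb_spec n j); [lia|lra]. Qed.

Lemma rsum_swap n m f : rsum n (fun i => rsum m (fun j => f i j)) = rsum m (fun j => rsum n (fun i => f i j)).
Proof. induction n; simpl. symmetry; apply rsum_zero.
 rewrite IHn. rewrite <- rsum_plus. auto. Qed.

Lemma rsum_zero_inv n f : (forall i, (i < n)%nat -> 0 <= f i) -> rsum n f = 0 -> forall i, (i < n)%nat -> f i = 0.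
Proof. intros H H0 i Hi. pose proof (rsum_term_le n f i H Hi). pose proof (H i Hi). lra. Qed.

Lemma rsum_prod n m f g : rsum n (fun i => rsum m (fun j => f i * g j)) = rsum n f * rsum m g.
Proof. rewrite (rsum_ext n _ (fun i => f i * rsum m g)). 
 rewrite (rsum_ext n _ (fun i => rsum m g * f i)) by (intros; lra).
 rewrite rsum_scal; lra. intros; apply rsum_scal. Qed.

Inductive ispolyS : (R -> R) -> Prop :=
| isp_const c : ispolyS (fun _ => c)
| isp_id : ispolyS (fun u => u)
| isp_plus f g : ispolyS f -> ispolyS g -> ispolyS (fun u => f u + g u)
| isp_mult f g : ispolyS f -> ispolyS g -> ispolyS (fun u => f u * g u)
| isp_ext f g : ispolyS f -> (forall u, f u = g u) -> ispolyS g.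

Lemma isp_pow f k : ispolyS f -> ispolyS (fun u => f u ^ k).
Proof. intros H; induction k; simpl. apply isp_const. apply isp_mult; auto. Qed.

Lemma isp_rsum m g : (forall l, ispolyS (fun u => g u l)) -> ispolyS (fun u => rsum m (g u)).
Proof. intros H; induction m; simpl. apply isp_const. apply isp_plus; auto. Qed.

Lemma isp_cont f : ispolyS f -> continuity f.
Proof. induction 1.
 - apply continuity_const. intros ??; auto.
 - apply derivable_continuous. apply derivable_id.
 - apply continuity_plus; auto.
 - apply continuity_mult; auto.
 - replace g with f; auto. apply functional_extensionality; auto. Qed.

Lemma isp_mon a (x : R -> nat -> R) : (forall j, ispolyS (fun u => x u j)) ->
  ispolyS (fun u => mon_eval a (x u)).
Proof. intros H. unfold mon_eval. induction (seq 0 (length a)); simpl.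
 apply isp_const. apply isp_mult; auto. apply isp_pow; auto. Qed.

Lemma isp_mp (p : mpoly) (x : R -> nat -> R) : (forall j, ispolyS (fun u => x u j)) ->
  ispolyS (fun u => mp_eval p (x u)).
Proof. intros H. unfold mp_eval. induction p; simpl.
 apply isp_const. apply isp_plus; auto. apply isp_mult. apply isp_const. apply isp_mon; auto. Qed.

Lemma mons_in n : forall d a, length a = n -> (list_sum a <= d)%nat -> In a (mons n d).
Proof. induction n; intros d a Hl Hs.
 - destruct a; simpl in *; [auto|lia].
 - destruct a as [|k a']; simpl in Hl, Hs; [lia|]. cbn [mons]. apply in_flat_map. exists k. split.
   + apply in_seq. lia.
   + apply in_map. apply IHn; lia. Qed.

Lemma mons_prop n : forall d a, In a (mons n d) -> length a = n /\ (list_sum a <= d)%nat.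
Proof. induction n; intros d a H; cbn [mons] in H.
 - destruct H as [<-|[]]. simpl; lia.
 - apply in_flat_map in H. destruct H as [k [Hk Ha]]. apply in_seq in Hk.
   apply in_map_iff in Ha. destruct Ha as [a' [<- Ha']]. apply IHn in Ha'. simpl; lia. Qed.

Fixpoint lidx (a : list nat) (l : list (list nat)) : nat :=
  match l with [] => O | b :: l' => if list_eq_dec Nat.eq_dec a b then O else S (lidx a l') end.

Lemma lidx_spec a l : In a l -> (lidx a l < length l)%nat /\ nth (lidx a l) l [] = a.
Proof. induction l; simpl; intros H; [destruct H|].
 destruct (list_eq_dec Nat.eq_dec a a0) as [->|Hne]; [split; auto; lia|].
 destruct H as [->|H]; [congruence|]. destruct (IHl H). split; [lia|auto]. Qed.

Lemma fold_map_seq_shift (g : nat -> R) s m :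
  fold_right Rmult 1 (map g (seq (S s) m)) = fold_right Rmult 1 (map (fun j => g (S j)) (seq s m)).
Proof. revert s; induction m; intros s; simpl; auto. rewrite IHm. auto. Qed.

Lemma mon_nil x : mon_eval [] x = 1.
Proof. reflexivity. Qed.

Lemma mon_cons h t x : mon_eval (h :: t) x = x O ^ h * mon_eval t (fun j => x (S j)).
Proof. unfold mon_eval. simpl length. simpl seq. simpl map. simpl fold_right. f_equal.
 rewrite fold_map_seq_shift. reflexivity. Qed.

Fixpoint pw (n i k : nat) : list nat :=
  match n with
  | O => []
  | S n' => match i with O => k :: repeat O n' | S i' => O :: pw n' i' k end
  end.

Lemma mon_repeat0 n x : mon_eval (repeat O n) x = 1.
Proof. revert x; induction n; intros x; simpl. reflexivity. rewrite mon_cons, IHn. simpl; lra. Qed.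

Lemma repeat_sum n : list_sum (repeat O n) = O.
Proof. induction n; simpl; auto. Qed.

Lemma pw_spec n : forall i k, (i < n)%nat -> length (pw n i k) = n /\ list_sum (pw n i k) = k /\
  forall x, mon_eval (pw n i k) x = x i ^ k.
Proof. induction n; intros i k Hi; [lia|]. destruct i as [|i]; simpl.
 - rewrite repeat_length, repeat_sum. split; [auto|split; [lia|]]. intros x. rewrite mon_cons, mon_repeat0. lra.
 - destruct (IHn i k ltac:(lia)) as [H1 [H2 H3]]. split; [lia|split; [auto|]].
   intros x. rewrite mon_cons, H3. simpl; lra. Qed.

Lemma mon_bound a : forall x B, 1 <= B -> (forall j, (j < length a)%nat -> Rabs (x j) <= B) ->
  Rabs (mon_eval a x) <= B ^ list_sum a.
Proof. induction a as [|h t IH]; intros x B HB Hx.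
 - rewrite mon_nil. simpl. rewrite Rabs_R1. lra.
 - rewrite mon_cons. simpl list_sum. rewrite pow_add, Rabs_mult, <- RPow_abs.
   apply Rmult_le_compat; [apply pow_le, Rabs_pos| apply Rabs_pos| |].
   + apply pow_incr. split; [apply Rabs_pos|]. apply Hx. simpl; lia.
   + apply IH; auto. intros j Hj. apply Hx. simpl; lia. Qed.

Section POC.
Variables n d : nat.
Notation N := (dimP n d).
Notation poc := (poly_of_coefs n d).
Definition mj (j : nat) (x : nat -> R) := mon_eval (nth j (mons n d) []) x.

Lemma poc_plus c1 c2 x : poc (fun j => c1 j + c2 j) x = poc c1 x + poc c2 x.
Proof. unfold poly_of_coefs. rewrite <- rsum_plus. apply rsum_ext; intros; lra. Qed.
Lemma poc_scal a c x : poc (fun j => a * c j) x = a * poc c x.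
Proof. unfold poly_of_coefs. rewrite <- rsum_scal. apply rsum_ext; intros; lra. Qed.
Lemma poc_ext c1 c2 x : (forall j, (j < N)%nat -> c1 j = c2 j) -> poc c1 x = poc c2 x.
Proof. intros H; unfold poly_of_coefs. apply rsum_ext; intros j Hj; rewrite H; auto. Qed.
Lemma poc_delta j a x : (j < N)%nat -> poc (fun i => if Nat.eqb i j then a else 0) x = a * mj j x.
Proof. intros Hj; unfold poly_of_coefs. rewrite <- (rsum_single N j (fun i => a * mj i x)) by auto.
 apply rsum_ext. intros i _. destruct (Nat.eqb i j); unfold mj; lra. Qed.

Definition rep (f : (nat -> R) -> R) (c : nat -> R) := forall x, poc c x = f x.

Lemma rep_plus f g c1 c2 : rep f c1 -> rep g c2 -> rep (fun x => f x + g x) (fun j => c1 j + c2 j).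
Proof. intros H1 H2 x. rewrite poc_plus, H1, H2. auto. Qed.
Lemma rep_scal f a c : rep f c -> rep (fun x => a * f x) (fun j => a * c j).
Proof. intros H x. rewrite poc_scal, H. auto. Qed.
Lemma rep_ext f g c : rep f c -> (forall x, f x = g x) -> rep g c.
Proof. intros H E x. rewrite H; auto. Qed.

Lemma rep_mon a : In a (mons n d) -> exists c, rep (mon_eval a) c.
Proof. intros H. destruct (lidx_spec a _ H) as [H1 H2].
 exists (fun i => if Nat.eqb i (lidx a (mons n d)) then 1 else 0). intros x.
 rewrite poc_delta by auto. unfold mj. rewrite H2. lra. Qed.

Lemma rep_pow i k : (i < n)%nat -> (k <= d)%nat -> exists c, rep (fun x => x i ^ k) c.
Proof. intros Hi Hk. destruct (pw_spec n i k Hi) as [H1 [H2 H3]].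
 destruct (rep_mon (pw n i k)) as [c Hc]. apply mons_in; lia.
 exists c. eapply rep_ext; eauto. Qed.

Lemma rep_shift i b k : (i < n)%nat -> (k <= d)%nat -> exists c, rep (fun x => (x i - b) ^ k) c.
Proof. intros Hi Hk.
 assert (forall m, (m <= k)%nat -> exists c, rep (fun x => sum_f_R0 (fun j => C k j * x i ^ j * (-b) ^ (k - j)) m) c).
 { induction m; intros Hm.
   - destruct (rep_pow i 0 Hi ltac:(lia)) as [c Hc]. exists (fun j => C k 0 * (-b)^(k-0) * c j).
     intros x. rewrite poc_scal, Hc. simpl. ring.
   - destruct (IHm ltac:(lia)) as [c1 H1]. destruct (rep_pow i (S m) Hi ltac:(lia)) as [c2 H2].
     exists (fun j => c1 j + C k (S m) * (-b)^(k - S m) * c2 j). intros x. rewrite poc_plus, poc_scal, H1, H2.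
     simpl sum_f_R0. cbn [pow]. set (p := x i ^ m). set (q := (-b)^(k - S m)). ring. }
 destruct (H k ltac:(lia)) as [c Hc]. exists c. intros x. rewrite Hc.
 unfold Rminus. rewrite binomial. auto. Qed.

Lemma rep_sum (g : nat -> (nat -> R) -> R) m :
  (forall i, (i < m)%nat -> exists c, rep (g i) c) -> exists c, rep (fun x => rsum m (fun i => g i x)) c.
Proof. induction m; intros H.
 - exists (fun _ => 0). intros x. unfold poly_of_coefs. simpl. rewrite (rsum_ext _ _ (fun _ => 0)).
   apply rsum_zero. intros; lra.
 - destruct IHm as [c1 H1]. intros; apply H; lia. destruct (H m ltac:(lia)) as [c2 H2].
   exists (fun j => c1 j + c2 j). intros x. rewrite poc_plus, H1, H2. simpl. auto. Qed.

Lemma mj_bound j x B : (j < N)%nat -> 1 <= B -> (forall i, (i < n)%nat -> Rabs (x i) <= B) ->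
  Rabs (mj j x) <= B ^ d.
Proof. intros Hj HB Hx. unfold mj. assert (HI : In (nth j (mons n d) []) (mons n d)) by (apply nth_In; auto).
 destruct (mons_prop _ _ _ HI) as [H1 H2]. apply Rle_trans with (B ^ list_sum (nth j (mons n d) [])). apply mon_bound; auto. rewrite H1; auto.
 apply Rle_pow; auto. Qed.

Lemma const_idx : exists j, (j < N)%nat /\ forall x, mj j x = 1.
Proof. assert (HI : In (repeat O n) (mons n d)) by (apply mons_in; [apply repeat_length| rewrite repeat_sum; lia]).
 destruct (lidx_spec _ _ HI) as [H1 H2]. exists (lidx (repeat O n) (mons n d)). split; auto.
 intros x; unfold mj; rewrite H2; apply mon_repeat0. Qed.
End POC.

Lemma cs_step S B V b v : S^2 <= B * V -> 0 <= B -> 0 <= V ->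
  (S + b * v)^2 <= (B + b^2) * (V + v^2).
Proof. intros H HB HV.
 assert (2 * S * b * v <= B * v^2 + b^2 * V).
 { destruct (Rle_or_lt (2 * S * b * v) 0) as [h|h]. nra.
   assert (h2 : (2*S*b*v)^2 <= (B * v^2 + b^2 * V)^2).
   { assert ((2*S*b*v)^2 = 4 * S^2 * (b*v)^2) by ring.
     assert ((B * v^2 + b^2 * V)^2 = (B*v^2 - b^2*V)^2 + 4 * (B*V)*(b*v)^2) by ring.
     assert (0 <= (b*v)^2) by apply pow2_ge_0.
     assert (S^2 * (b*v)^2 <= B*V*(b*v)^2) by (apply Rmult_le_compat_r; auto).
     assert (0 <= (B*v^2 - b^2*V)^2) by apply pow2_ge_0. lra. }
   assert (0 <= B * v^2 + b^2 * V) by nra.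
   destruct (Rle_or_lt (2*S*b*v) (B*v^2+b^2*V)) as [h3|h3]; auto. exfalso.
   assert ((B*v^2+b^2*V)*(B*v^2+b^2*V) < (2*S*b*v)*(2*S*b*v)) by (apply Rmult_le_0_lt_compat; lra).
   lra. }
 nra. Qed.

Lemma cs n b v : (rsum n (fun i => b i * v i))^2 <= rsum n (fun i => b i ^2) * rsum n (fun i => v i ^2).
Proof. induction n; simpl rsum. nra.
 apply cs_step; auto; apply rsum_nonneg; intros; nra. Qed.

Lemma quad_ext k M v w : (forall i, (i < k)%nat -> v i = w i) -> quad_form k M v = quad_form k M w.
Proof. intros H. unfold quad_form. apply rsum_ext; intros i Hi. apply rsum_ext; intros j Hj.
 rewrite (H i Hi), (H j Hj). auto. Qed.

Lemma quad_split k M v : quad_form (S k) M v =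
  quad_form k M v + v k * rsum k (fun i => (M i k + M k i) * v i) + M k k * v k ^ 2.
Proof. unfold quad_form. simpl rsum.
 rewrite rsum_plus.
 assert (E : v k * rsum k (fun i => (M i k + M k i) * v i) =
   rsum k (fun i => v i * M i k * v k) + rsum k (fun j => v k * M k j * v j)).
 { rewrite <- rsum_scal, <- rsum_plus. apply rsum_ext; intros; ring. }
 rewrite E. ring. Qed.

Lemma pd_spd k : forall M, pd k M -> exists lam, 0 < lam /\
  forall v, lam * rsum k (fun i => v i ^ 2) <= quad_form k M v.
Proof. induction k; intros M HM.
 - exists 1. split; [lra|]. intros v. simpl. unfold quad_form. simpl. lra.
 - set (m := M k k).
   assert (Hm : 0 < m).
   { set (e := fun i => if Nat.eqb i k then 1 else 0).
     assert (He : quad_form (S k) M e = m).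
     { rewrite quad_split.
       assert (ek : e k = 1) by (unfold e; rewrite Nat.eqb_refl; auto).
       assert (ei : forall i, (i < k)%nat -> e i = 0).
       { intros i Hi. unfold e. destruct (Nat.eqb_spec i k); [lia|auto]. }
       rewrite ek, (quad_ext k M e (fun _ => 0)) by auto.
       rewrite (rsum_ext k _ (fun _ => 0)). rewrite rsum_zero. unfold quad_form.
       rewrite (rsum_ext k _ (fun _ => 0)). rewrite rsum_zero. unfold m; ring.
       intros; rewrite (rsum_ext k _ (fun _ => 0)). apply rsum_zero. intros; ring.
       intros i Hi. rewrite ei; auto; ring. }
     rewrite <- He. apply HM. exists k. split; [lia|]. unfold e; rewrite Nat.eqb_refl; lra. }
   set (b := fun i => (M i k + M k i) / 2).
   set (beta := fun v => rsum k (fun i => b i * v i)).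
   set (M2 := fun i j => M i j - b i * b j / m).
   assert (HQ2 : forall v, quad_form k M2 v = quad_form k M v - (beta v)^2 / m).
   { intros v. unfold quad_form, M2, beta.
     assert (E : rsum k (fun i => rsum k (fun j => v i * (M i j - b i * b j / m) * v j)) =
       rsum k (fun i => rsum k (fun j => v i * M i j * v j)) -
       / m * rsum k (fun i => rsum k (fun j => (b i * v i) * (b j * v j)))).
     { rewrite <- rsum_scal, <- rsum_minus. apply rsum_ext; intros i _.
       rewrite <- rsum_scal, <- rsum_minus. apply rsum_ext; intros j _. field. lra. }
     rewrite E, rsum_prod. unfold Rdiv. simpl. ring. }
   assert (Hsplit : forall v, quad_form (S k) M v = quad_form k M v + 2 * v k * beta v + m * v k ^ 2).
   { intros v. rewrite quad_split. unfold beta, m. 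
     rewrite (rsum_ext k (fun i => (M i k + M k i) * v i) (fun i => 2 * (b i * v i))).
     rewrite rsum_scal. ring. intros; unfold b; field. }
   assert (HM2 : pd k M2).
   { intros v [i [Hi Hv]].
     set (w := fun j => if Nat.eqb j k then - beta v / m else v j).
     assert (Hw : forall j, (j < k)%nat -> w j = v j).
     { intros j Hj; unfold w. destruct (Nat.eqb_spec j k); [lia|auto]. }
     assert (Hb : beta w = beta v).
     { unfold beta. apply rsum_ext. intros j Hj; rewrite Hw; auto. }
     assert (Hpos : 0 < quad_form (S k) M w).
     { apply HM. exists i. split; [lia|]. rewrite Hw; auto. }
     rewrite Hsplit, Hb, (quad_ext k M w v Hw) in Hpos.
     unfold w in Hpos. rewrite Nat.eqb_refl in Hpos. rewrite HQ2.
     replace (quad_form k M v - beta v ^ 2 / m) with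
       (quad_form k M v + 2 * (- beta v / m) * beta v + m * (- beta v / m) ^ 2); auto.
     field. lra. }
   destruct (IHk M2 HM2) as [lam' [Hl' Hlam']].
   set (Bb := rsum k (fun i => b i ^ 2)).
   assert (HB : 0 <= Bb) by (apply rsum_nonneg; intros; nra).
   set (lam := Rmin (m / 2) (lam' / (1 + 2 * Bb / (m * m)))).
   assert (Hden : 0 < 1 + 2 * Bb / (m * m)).
   { assert (0 <= 2 * Bb / (m * m)). apply Rmult_le_pos. lra. left; apply Rinv_0_lt_compat; nra. lra. }
   assert (Hl1 : lam <= m / 2) by apply Rmin_l.
   assert (Hl2 : lam * (1 + 2 * Bb / (m * m)) <= lam').
   { assert (lam <= lam' / (1 + 2 * Bb / (m * m))) by apply Rmin_r.
     apply Rmult_le_compat_r with (r := 1 + 2 * Bb / (m * m)) in H; [|lra].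
     unfold Rdiv in H at 2. rewrite Rmult_assoc, Rinv_l in H; lra. }
   assert (Hlp : 0 < lam).
   { apply Rmin_glb_lt. lra. apply Rdiv_lt_0_compat; lra. }
   exists lam. split; auto. intros v. cbn [rsum]. rewrite Hsplit.
   set (V := rsum k (fun i => v i ^ 2)). set (x := v k). set (be := beta v).
   assert (HV : 0 <= V) by (apply rsum_nonneg; intros; nra).
   assert (Hcs : be ^ 2 <= Bb * V) by apply cs.
   assert (Hq : quad_form k M v = quad_form k M2 v + be ^ 2 / m) by (rewrite HQ2; unfold be; field; lra).
   assert (Hq2 := Hlam' v). fold V in Hq2.
   set (w := x + be / m).
   assert (Hx2 : x ^ 2 <= 2 * w ^ 2 + 2 * (be ^ 2 / (m * m))).
   { assert (E1 : be ^ 2 / (m * m) = (be / m) ^ 2) by (field; lra). rewrite E1.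
     assert (E2 : x = w - be / m) by (unfold w; ring). rewrite E2.
     assert (0 <= (w + be / m)^2) by apply pow2_ge_0.
     assert (E3 : (w - be/m)^2 = 2 * w^2 + 2 * (be/m)^2 - (w + be/m)^2) by ring. lra. }
   assert (Hmw : quad_form k M v + 2 * x * be + m * x ^ 2 = quad_form k M2 v + m * w ^ 2).
   { rewrite Hq. unfold w. field. lra. }
   rewrite Hmw.
   assert (Hbe : be ^ 2 / (m * m) <= Bb * V / (m * m)).
   { unfold Rdiv. apply Rmult_le_compat_r; auto. left; apply Rinv_0_lt_compat; nra. }
   assert (lam * x ^ 2 <= lam * (2 * w ^ 2) + lam * (2 * (Bb * V / (m * m)))).
   { rewrite <- Rmult_plus_distr_l. apply Rmult_le_compat_l; lra. }
   assert (lam * (2 * w ^ 2) <= m * w ^ 2) by nra.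
   assert (lam * V + lam * (2 * (Bb * V / (m * m))) = lam * (1 + 2 * Bb / (m * m)) * V)
     by (field; lra).
   assert (lam * (1 + 2 * Bb / (m * m)) * V <= lam' * V) by (apply Rmult_le_compat_r; auto).
   lra.
Qed.

Definition bil k (M : nat -> nat -> R) w v := rsum k (fun i => rsum k (fun j => w i * M i j * v j)).

Lemma quad_expand k M v w t : quad_form k M (fun i => v i + t * w i) =
  quad_form k M v + t * (bil k M w v + bil k M v w) + t^2 * quad_form k M w.
Proof. unfold quad_form, bil.
 rewrite <- rsum_scal, <- rsum_plus, <- rsum_scal, <- !rsum_plus. apply rsum_ext; intros i _.
 rewrite <- rsum_scal, <- rsum_plus, <- rsum_scal, <- !rsum_plus. apply rsum_ext; intros j _. ring. Qed.

Lemma bil_sym k M v w : (forall i j, (i < k)%nat -> (j < k)%nat -> M i j = M j i) ->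
  bil k M v w = bil k M w v.
Proof. intros H. unfold bil. rewrite rsum_swap. apply rsum_ext; intros i Hi. apply rsum_ext; intros j Hj.
 rewrite H by auto. ring. Qed.

Lemma psd_null k M v : (forall i j, (i < k)%nat -> (j < k)%nat -> M i j = M j i) ->
  psd k M -> quad_form k M v = 0 -> forall i, (i < k)%nat -> rsum k (fun j => M i j * v j) = 0.
Proof. intros Hs Hp Hq.
 set (w := fun i => rsum k (fun j => M i j * v j)).
 assert (Hb : bil k M w v = 0).
 { set (B := bil k M w v). set (Q := quad_form k M w).
   assert (HQ : 0 <= Q) by apply Hp.
   assert (Ht : forall t, 0 <= 2 * t * B + t^2 * Q).
   { intros t. pose proof (Hp (fun i => v i + t * w i)) as H. rewrite quad_expand, Hq in H.
     rewrite (bil_sym k M v w Hs) in H. fold B Q in H. lra. }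
   destruct (Req_dec B 0) as [|Hn]; auto. exfalso.
   pose proof (Ht (- B / (Q + 1))).
   assert (E : 2 * (- B / (Q + 1)) * B + (- B / (Q + 1))^2 * Q = - B^2 * (Q + 2) / (Q + 1)^2) by (field; lra).
   rewrite E in H.
   assert (0 < B^2) by (simpl; rewrite Rmult_1_r; apply Rsqr_pos_lt; auto). 
   assert (0 < (Q+1)^2) by (apply pow_lt; lra).
   assert (0 < B^2 * (Q + 2) / (Q + 1)^2) by (apply Rdiv_lt_0_compat; nra).
   lra. }
 assert (Hw : rsum k (fun i => w i ^ 2) = 0).
 { rewrite <- Hb. unfold bil. apply rsum_ext; intros i _. unfold w at 1.
   rewrite (rsum_ext k (fun j => w i * M i j * v j) (fun j => w i * (M i j * v j))) by (intros; ring). rewrite rsum_scal. unfold w. ring. }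
 intros i Hi. pose proof (rsum_zero_inv k (fun i => w i ^ 2) ltac:(intros; apply pow2_ge_0) Hw i Hi).
 simpl in H. fold (w i). nra. Qed.

Lemma quad_minus k M1 M2 v : quad_form k M1 v - quad_form k M2 v = quad_form k (fun i j => M1 i j - M2 i j) v.
Proof. unfold quad_form. rewrite <- rsum_minus. apply rsum_ext; intros i _.
 rewrite <- rsum_minus. apply rsum_ext; intros; ring. Qed.

Lemma prod_le_V a b V : a^2 <= V -> b^2 <= V -> Rabs a * Rabs b <= V.
Proof. intros Ha Hb. rewrite <- (pow2_abs a) in Ha. rewrite <- (pow2_abs b) in Hb.
 assert (0 <= (Rabs a - Rabs b)^2) by apply pow2_ge_0. nra. Qed.

Lemma pencil_open N A c k : pd k (pencil N A c) -> exists eps, 0 < eps /\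
  forall c', (forall l, (l < N)%nat -> Rabs (c' l - c l) < eps) -> psd k (pencil N A c').
Proof. intros Hpd. destruct (pd_spd k _ Hpd) as [lam [Hl Hlam]].
 set (al := fun i j => rsum N (fun l => Rabs (A (S l) i j))).
 set (alpha := rsum k (fun i => rsum k (fun j => al i j))).
 assert (Ha : 0 <= alpha) by (apply rsum_nonneg; intros; apply rsum_nonneg; intros; apply rsum_nonneg; intros; apply Rabs_pos).
 exists (lam / (alpha + 1)). split. apply Rdiv_lt_0_compat; lra.
 intros c' Hc' v. set (V := rsum k (fun i => v i ^ 2)).
 assert (HV : 0 <= V) by (apply rsum_nonneg; intros; apply pow2_ge_0).
 set (eps := lam / (alpha + 1)).
 assert (He : 0 < eps) by (apply Rdiv_lt_0_compat; lra).
 set (D := fun i j => pencil N A c' i j - pencil N A c i j).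
 assert (HD : forall i j, Rabs (D i j) <= eps * al i j).
 { intros i j. unfold D, pencil.
   replace (A 0%nat i j + rsum N (fun l => c' l * A (S l) i j) - (A 0%nat i j + rsum N (fun l => c l * A (S l) i j)))
     with (rsum N (fun l => (c' l - c l) * A (S l) i j)) by (rewrite (rsum_ext N _ (fun l => c' l * A (S l) i j - c l * A (S l) i j)) by (intros; ring); rewrite rsum_minus; ring).
   eapply Rle_trans. apply rsum_abs. unfold al. rewrite <- rsum_scal. apply rsum_le; intros l Hl'.
   rewrite Rabs_mult. apply Rmult_le_compat_r. apply Rabs_pos. left; auto. }
 assert (HQD : Rabs (quad_form k D v) <= eps * alpha * V).
 { unfold quad_form. eapply Rle_trans. apply rsum_abs.
   unfold alpha. rewrite <- rsum_scal, <- (Rmult_comm V), <- rsum_scal.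
   apply rsum_le; intros i Hi. eapply Rle_trans. apply rsum_abs.
   rewrite <- !rsum_scal. apply rsum_le; intros j Hj.
   rewrite !Rabs_mult.
   assert (Rabs (v i) * Rabs (v j) <= V) by (apply prod_le_V; unfold V; apply (rsum_term_le k (fun i => v i ^ 2)); auto; intros; apply pow2_ge_0).
   pose proof (HD i j). pose proof (Rabs_pos (D i j)). pose proof (Rabs_pos (v i)). pose proof (Rabs_pos (v j)).
   assert (Rabs (v i) * Rabs (D i j) * Rabs (v j) = (Rabs (v i) * Rabs (v j)) * Rabs (D i j)) by ring.
   rewrite H4. assert (0 <= eps * al i j) by lra.
   assert ((Rabs (v i) * Rabs (v j)) * Rabs (D i j) <= V * (eps * al i j)) by (apply Rmult_le_compat; auto; apply Rmult_le_pos; auto).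
   lra. }
 assert (Hdiff : quad_form k (pencil N A c') v = quad_form k (pencil N A c) v + quad_form k D v).
 { unfold D. rewrite <- quad_minus. ring. }
 rewrite Hdiff. pose proof (Hlam v). fold V in H.
 assert (eps * alpha <= lam).
 { unfold eps. unfold Rdiv. rewrite Rmult_assoc, (Rmult_comm (/ _)).
   assert (alpha * / (alpha + 1) <= 1). { apply (Rmult_le_reg_r (alpha + 1)). lra. rewrite Rmult_assoc, Rinv_l; lra. }
   nra. }
 assert (eps * alpha * V <= lam * V) by (apply Rmult_le_compat_r; auto).
 pose proof (Rle_abs (- quad_form k D v)). rewrite Rabs_Ropp in H2. lra. Qed.

Lemma even_pow_nonneg z m : 0 <= z ^ (2 * m).
Proof. rewrite pow_mult. apply pow_le. apply pow2_ge_0. Qed.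

Fixpoint rmx (k : nat) (x : nat -> R) : R :=
  match k with O => 1 | S k' => Rmax (rmx k' x) (Rabs (x k')) end.

Lemma rmx_ge1 k x : 1 <= rmx k x.
Proof. induction k; simpl; [lra|]. eapply Rle_trans; [apply IHk|apply Rmax_l]. Qed.

Lemma rmx_ge k x i : (i < k)%nat -> Rabs (x i) <= rmx k x.
Proof. induction k; simpl; intros H; [lia|]. destruct (Nat.eq_dec i k) as [->|]. apply Rmax_r.
 eapply Rle_trans; [apply IHk; lia|apply Rmax_l]. Qed.

Lemma rmx_cases k x : rmx k x = 1 \/ exists i, (i < k)%nat /\ rmx k x = Rabs (x i).
Proof. induction k; simpl; [auto|]. unfold Rmax. destruct (Rle_dec (rmx k x) (Rabs (x k))).
 right; exists k; split; [lia|auto]. destruct IHk as [H|[i [Hi H]]]; [left; auto| right; exists i; split; [lia|auto]]. Qed.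

Section Main.
Variables (n m : nat) (K : (nat -> R) -> Prop) (a : nat -> R) (r : R).
Hypotheses (Hn : (1 <= n)%nat) (Hm : (2 <= m)%nat) (Hr : 0 < r)
  (HK : forall y, ballR n a r y -> K y).
Let d := (2 * m)%nat.
Notation N := (dimP n d).

Definition y0 (x : nat -> R) := x O - a O.
Definition Ssum (x : nat -> R) := rsum n (fun i => (x i - a i) ^ d).
Definition G (u : R) (x : nat -> R) :=
  (y0 x ^ 2 - u) ^ 2 * (1 + y0 x ^ (d - 4)) + (Ssum x - y0 x ^ d).
Definition F0 x := y0 x ^ 4 + Ssum x.
Definition F1 x := -2 * (y0 x ^ 2 + y0 x ^ (d - 2)).
Definition F2 x := 1 + y0 x ^ (d - 4).

Lemma FG u x : F0 x + u * F1 x + u ^ 2 * F2 x = G u x.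
Proof. unfold F0, F1, F2, G. set (y := y0 x).
 assert (E1 : y ^ d = y ^ 4 * y ^ (d - 4)) by (rewrite <- pow_add; f_equal; unfold d; lia).
 assert (E2 : y ^ (d - 2) = y ^ 2 * y ^ (d - 4)) by (rewrite <- pow_add; f_equal; unfold d; lia).
 rewrite E1, E2. set (z := y ^ (d - 4)). ring. Qed.

Lemma Ssum_nonneg x : 0 <= Ssum x.
Proof. apply rsum_nonneg. intros; apply even_pow_nonneg. Qed.

Lemma Ssum_ge_y0 x : y0 x ^ d <= Ssum x.
Proof. unfold Ssum, y0. apply (rsum_term_le n (fun i => (x i - a i) ^ d) 0). intros; apply even_pow_nonneg. lia. Qed.

Lemma G_nonneg u x : 0 <= G u x.
Proof. unfold G. pose proof (Ssum_ge_y0 x).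
 assert (0 <= y0 x ^ (d - 4)) by (replace (d - 4)%nat with (2 * (m - 2))%nat by (unfold d; lia); apply even_pow_nonneg).
 assert (0 <= (y0 x ^ 2 - u) ^ 2) by apply pow2_ge_0. nra. Qed.

Lemma G_lower x : 1 + Ssum x <= G (-1) x.
Proof. unfold G. set (y := y0 x). set (Y := y ^ 2). set (Z := y ^ (d - 4)).
 assert (HZ : 0 <= Z) by (unfold Z; replace (d - 4)%nat with (2 * (m - 2))%nat by (unfold d; lia); apply even_pow_nonneg).
 assert (HY : 0 <= Y) by apply pow2_ge_0.
 assert (E : y ^ d = Y ^ 2 * Z) by (unfold Y, Z; rewrite <- pow_mult, <- pow_add; f_equal; unfold d; lia).
 rewrite E. assert (0 <= Y * Z) by nra. assert (0 <= Y*Y) by nra. nra. Qed.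

Lemma pow_d_bound z b : z ^ d <= 2 ^ d * ((z - b) ^ d + b ^ d).
Proof. set (M := Rmax (Rabs (z - b)) (Rabs b)).
 assert (H1 : Rabs z <= 2 * M).
 { replace z with ((z - b) + b) at 1 by ring. eapply Rle_trans. apply Rabs_triang.
   pose proof (Rmax_l (Rabs (z - b)) (Rabs b)). pose proof (Rmax_r (Rabs (z - b)) (Rabs b)). fold M in H, H0. lra. }
 assert (H2 : Rabs z ^ d <= 2 ^ d * M ^ d).
 { rewrite <- Rpow_mult_distr. apply pow_incr. split; auto. apply Rabs_pos. }
 assert (H3 : forall w, Rabs w ^ d = w ^ d).
 { intros w. rewrite RPow_abs. apply Rabs_right. apply Rle_ge, even_pow_nonneg. }
 assert (H4 : M ^ d <= (z - b) ^ d + b ^ d).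
 { unfold M, Rmax. destruct (Rle_dec (Rabs (z - b)) (Rabs b)).
   rewrite H3. pose proof (even_pow_nonneg (z - b) m). fold d in H. lra.
   rewrite H3. pose proof (even_pow_nonneg b m). fold d in H. lra. }
 rewrite H3 in H2. assert (0 < 2 ^ d) by (apply pow_lt; lra). nra. Qed.

Definition Asum := rsum n (fun i => a i ^ d).
Definition kap := 1 + 2 ^ d * (1 + Asum).

Lemma kap_pos : 1 <= kap.
Proof. unfold kap. assert (0 <= Asum) by (apply rsum_nonneg; intros; apply even_pow_nonneg).
 assert (0 < 2 ^ d) by (apply pow_lt; lra). nra. Qed.

Lemma rmx_bound x : rmx n x ^ d <= kap * G (-1) x.
Proof.
 assert (HA : 0 <= Asum) by (apply rsum_nonneg; intros; apply even_pow_nonneg).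
 assert (H2d : 0 < 2 ^ d) by (apply pow_lt; lra).
 assert (HS := Ssum_nonneg x).
 assert (Hsum : rsum n (fun i => x i ^ d) <= 2 ^ d * (Ssum x + Asum)).
 { unfold Ssum, Asum. rewrite <- rsum_plus, <- rsum_scal. apply rsum_le. intros; apply pow_d_bound. }
 assert (Hr1 : rmx n x ^ d <= 1 + rsum n (fun i => x i ^ d)).
 { assert (0 <= rsum n (fun i => x i ^ d)) by (apply rsum_nonneg; intros; apply even_pow_nonneg).
   destruct (rmx_cases n x) as [E|[i [Hi E]]]; rewrite E.
   - rewrite pow1. lra.
   - rewrite RPow_abs, Rabs_right by (apply Rle_ge, even_pow_nonneg).
     pose proof (rsum_term_le n (fun i => x i ^ d) i ltac:(intros; apply even_pow_nonneg) Hi). simpl in H0. lra. }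
 pose proof (G_lower x). unfold kap.
 assert (1 + 2 ^ d * (Ssum x + Asum) <= (1 + 2 ^ d * (1 + Asum)) * (1 + Ssum x)).
 { set (t := 2 ^ d) in *. assert (0 <= t * Asum * Ssum x) by (repeat apply Rmult_le_pos; lra).
   assert (E : (1 + t * (1 + Asum)) * (1 + Ssum x) = 1 + t * (Ssum x + Asum) + (Ssum x + t + t * Asum * Ssum x)) by ring.
   rewrite E. lra. }
 assert (0 <= 1 + 2 ^ d * (1 + Asum)) by nra.
 assert ((1 + 2 ^ d * (1 + Asum)) * (1 + Ssum x) <= (1 + 2 ^ d * (1 + Asum)) * G (-1) x) by (apply Rmult_le_compat_l; auto).
 lra. Qed.

Variables c0 c1 c2 : nat -> R.
Hypotheses (H0 : rep n d F0 c0) (H1 : rep n d F1 c1) (H2 : rep n d F2 c2).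

Definition gam (u : R) : nat -> R := fun j => c0 j + u * c1 j + u ^ 2 * c2 j.

Lemma gam_G u x : poly_of_coefs n d (gam u) x = G u x.
Proof. unfold gam. rewrite poc_plus, poc_plus, poc_scal, poc_scal, H0, H1, H2. apply FG. Qed.

Lemma gam_isp j : ispolyS (fun u => gam u j).
Proof. unfold gam. apply isp_plus. apply isp_plus. apply isp_const. apply isp_mult. apply isp_id. apply isp_const.
 apply isp_mult. apply isp_pow, isp_id. apply isp_const. Qed.

Lemma gam_Pd u : Pd n d K (gam u).
Proof. intros x _. rewrite gam_G. apply G_nonneg. Qed.

Lemma gam_boundary u : 0 < u < r ^ 2 -> boundaryR N (Pd n d K) (gam u).
Proof. intros [Hu1 Hu2]. split.
 - intros r' Hr'. exists (gam u). split; [|apply gam_Pd]. intros i _. rewrite Rminus_diag, Rabs_R0. auto.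
 - intros [rho [Hrho Hball]]. destruct (const_idx n d) as [j0 [Hj0 Hmj]].
   set (yv := fun j => gam u j + (- (rho / 2)) * (if Nat.eqb j j0 then 1 else 0)).
   assert (Hy : Pd n d K yv).
   { apply Hball. intros j Hj. unfold yv. replace (gam u j + - (rho / 2) * (if Nat.eqb j j0 then 1 else 0) - gam u j)
       with (- (rho / 2) * (if Nat.eqb j j0 then 1 else 0)) by ring.
     destruct (Nat.eqb j j0); rewrite Rabs_mult, Rabs_Ropp, Rabs_right by lra.
     rewrite Rabs_R1; lra. rewrite Rabs_R0; lra. }
   set (z := fun i => if Nat.eqb i 0 then a 0%nat + sqrt u else a i).
   assert (Hz : K z).
   { apply HK. intros i Hi. unfold z. destruct (Nat.eqb_spec i 0) as [->|].
     - replace (a 0%nat + sqrt u - a 0%nat) with (sqrt u) by ring. rewrite Rabs_right by (apply Rle_ge, sqrt_pos).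
       rewrite <- (sqrt_pow2 r) by lra. apply sqrt_lt_1; lra.
     - rewrite Rminus_diag, Rabs_R0. auto. }
   pose proof (Hy z Hz) as Hneg. unfold yv in Hneg.
   rewrite poc_plus, poc_scal, poc_delta, gam_G, Hmj in Hneg by auto.
   assert (HG : G u z = 0).
   { unfold G. assert (E0 : y0 z = sqrt u) by (unfold y0, z; simpl; ring).
     assert (E1 : Ssum z = sqrt u ^ d).
     { unfold Ssum. rewrite (rsum_ext n _ (fun i => if Nat.eqb i 0 then sqrt u ^ d else 0)).
       apply (rsum_single n 0 (fun _ => sqrt u ^ d)). lia.
       intros i Hi. unfold z. destruct (Nat.eqb_spec i 0) as [->|]. f_equal; simpl; ring.
       rewrite Rminus_diag. apply pow_i. unfold d; lia. }
     rewrite E0, E1, pow2_sqrt by lra. ring. }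
   rewrite HG in Hneg. lra.
Qed.

Lemma gam_strong : exists rho, 0 < rho /\ forall c', (forall j, (j < N)%nat -> Rabs (c' j - gam (-1) j) < rho) ->
  forall x, 0 <= poly_of_coefs n d c' x.
Proof.
 pose proof kap_pos as Hk.
 set (rho := / (kap * (INR N + 1))).
 assert (HN : 0 <= INR N) by apply pos_INR.
 assert (Hrho : 0 < rho) by (apply Rinv_0_lt_compat; nra).
 exists rho. split; auto. intros c' Hc' x.
 set (B := rmx n x).
 assert (HB1 : 1 <= B) by apply rmx_ge1.
 assert (Hsplit : poly_of_coefs n d c' x = G (-1) x + poly_of_coefs n d (fun j => c' j - gam (-1) j) x).
 { rewrite <- gam_G, <- poc_plus. apply poc_ext. intros; ring. }
 assert (Hbd : Rabs (poly_of_coefs n d (fun j => c' j - gam (-1) j) x) <= INR N * (rho * B ^ d)).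
 { unfold poly_of_coefs. eapply Rle_trans. apply rsum_abs. rewrite <- rsum_const. apply rsum_le.
   intros j Hj. rewrite Rabs_mult. apply Rmult_le_compat. apply Rabs_pos. apply Rabs_pos.
   left; apply Hc'; auto. apply (mj_bound n d); auto. intros; apply rmx_ge; auto. }
 pose proof (rmx_bound x). fold B in H.
 pose proof (G_nonneg (-1) x).
 assert (INR N * (rho * B ^ d) <= G (-1) x).
 { assert (INR N * (rho * B ^ d) <= INR N * (rho * (kap * G (-1) x))).
   { apply Rmult_le_compat_l; auto. apply Rmult_le_compat_l; lra. }
   assert (E : INR N * (rho * (kap * G (-1) x)) = (INR N / (INR N + 1)) * G (-1) x) by (unfold rho; field; lra).
   assert (INR N / (INR N + 1) <= 1). { apply (Rmult_le_reg_r (INR N + 1)). lra. unfold Rdiv. rewrite Rmult_assoc, Rinv_l; lra. }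
   nra. }
 pose proof (Rle_abs (- poly_of_coefs n d (fun j => c' j - gam (-1) j) x)) as Hab. rewrite Rabs_Ropp in Hab.
 lra.
Qed.

Lemma int_comb w t : (forall x, 0 <= poly_of_coefs n d w x) -> 0 < t ->
  interiorR N (Pd n d K) (fun j => w j + t * gam (-1) j).
Proof. intros Hw Ht. destruct gam_strong as [rho [Hrho Hs]].
 exists (t * rho). split. nra. intros yv Hy x _.
 assert (E : poly_of_coefs n d yv x = poly_of_coefs n d w x + t * poly_of_coefs n d (fun j => (yv j - w j) / t) x).
 { rewrite <- poc_scal, <- poc_plus. apply poc_ext. intros; field; lra. }
 rewrite E. assert (0 <= poly_of_coefs n d (fun j => (yv j - w j) / t) x).
 { apply Hs. intros j Hj. specialize (Hy j Hj).
   replace ((yv j - w j) / t - gam (-1) j) with ((yv j - (w j + t * gam (-1) j)) / t) by (field; lra).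
   unfold Rdiv. rewrite Rabs_mult, (Rabs_right (/ t)) by (apply Rle_ge; left; apply Rinv_0_lt_compat; lra).
   apply (Rmult_lt_reg_r t). lra. rewrite Rmult_assoc, Rinv_l; lra. }
 pose proof (Hw x). nra. Qed.

Lemma gam_int : interiorR N (Pd n d K) (gam (-1)).
Proof. destruct gam_strong as [rho [Hrho Hs]]. exists rho. split; auto. intros yv Hy x _. apply Hs; auto. Qed.

End Main.

Module MC.
Import all_boot all_algebra.
Import GRing.Theory.

Definition Req_bool (x y : R) : bool := if Req_EM_T x y then true else false.
Lemma Req_boolP : Equality.axiom Req_bool.
Proof. move=> x y; rewrite /Req_bool; case: Req_EM_T => h; constructor => //. Qed.
HB.instance Definition _ := hasDecEq.Build R Req_boolP.

Definition Rfind (P : pred R) (n : nat) : option R :=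
  match excluded_middle_informative (exists x, P x) with
  | left h => Some (proj1_sig (constructive_indefinite_description _ h))
  | right _ => None end.
Lemma Rfind_correct P n x : Rfind P n = Some x -> P x.
Proof. rewrite /Rfind; case: excluded_middle_informative => // h [<-].
exact: (proj2_sig (constructive_indefinite_description _ h)). Qed.
Lemma Rfind_complete (P : pred R) : (exists x, P x) -> exists n, Rfind P n.
Proof. move=> h; exists 0%N; rewrite /Rfind; case: excluded_middle_informative => //. Qed.
Lemma Rfind_ext (P Q : pred R) : P =1 Q -> Rfind P =1 Rfind Q.
Proof. move=> h; have -> : P = Q by apply: functional_extensionality. by []. Qed.
HB.instance Definition _ := hasChoice.Build R Rfind_correct Rfind_complete Rfind_ext.

Lemma RplusA : associative Rplus. Proof. move=> x y z; ring. Qed.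
Lemma RmultA : associative Rmult. Proof. move=> x y z; ring. Qed.
HB.instance Definition _ := GRing.isZmodule.Build R RplusA Rplus_comm Rplus_0_l Rplus_opp_l.
Lemma R1n0 : (R1 != R0)%B.
Proof. apply/eqP; exact: R1_neq_R0. Qed.
HB.instance Definition _ := GRing.Zmodule_isComNzRing.Build R RmultA Rmult_comm Rmult_1_l Rmult_plus_distr_r R1n0.
Lemma RmulV (x : R) : (x != 0)%B -> Rmult (Rinv x) x = 1.
Proof. move/eqP=> h; exact: Rinv_l. Qed.
HB.instance Definition _ := GRing.ComNzRing_isField.Build R RmulV Rinv_0.

Lemma ispoly_poly f : ispolyS f -> exists p : {poly R}, forall u, f u = horner p u.
Proof.
elim=> [c|| f1 g1 _ [p hp] _ [q hq] | f1 g1 _ [p hp] _ [q hq] | f1 g1 _ [p hp] e].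
- by exists (polyC c) => u; rewrite hornerC.
- by exists (polyX R) => u; rewrite hornerX.
- by exists (GRing.add p q) => u; rewrite hornerD hp hq.
- by exists (GRing.mul p q) => u; rewrite hornerM hp hq.
- by exists p => u; rewrite -e hp.
Qed.

Lemma poly_interval (p : {poly R}) a b : Rlt a b ->
  (forall u, Rlt a u -> Rlt u b -> horner p u = 0) -> p = GRing.zero.
Proof.
move=> ab h.
pose g := fun i : nat => Rplus a (Rdiv (Rminus b a) (INR i + 2)).
apply: (@roots_geq_poly_eq0 _ p (mkseq g (size p))).
- apply/allP => x /mapP [i _ ->]; apply/eqP; apply: h; rewrite /g.
  + have : 0 < (b - a) / (INR i + 2).
      apply: Rdiv_lt_0_compat; first lra. have := pos_INR i; lra.
    lra.
  + have hi := pos_INR i.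
    have h1 : (b - a) / (INR i + 2) * (INR i + 2) = b - a by field; lra.
    have h2 : 0 < (b - a) / (INR i + 2).
      apply: Rdiv_lt_0_compat; lra.
    nra.
- rewrite map_inj_uniq ?iota_uniq // => i j; rewrite /g => e.
  have hi := pos_INR i; have hj := pos_INR j.
  have e2 : (b - a) / (INR i + 2) = (b - a) / (INR j + 2) by lra.
  apply: INR_eq.
  have h1 : (b - a) / (INR i + 2) * (INR i + 2) = b - a by field; lra.
  have h2 : (b - a) / (INR j + 2) * (INR j + 2) = b - a by field; lra.
  rewrite e2 in h1.
  have h3 : 0 < (b - a) / (INR j + 2) by apply: Rdiv_lt_0_compat; lra.
  nra.
- by rewrite size_mkseq.
Qed.

Section Det.
Local Open Scope ring_scope.
Lemma rsum_big k (f : nat -> R) : rsum k f = \sum_(i < k) f i.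
Proof.
elim: k => [|k IH]; first by rewrite big_ord0.
by rewrite big_ord_recr /= -IH.
Qed.

Variable M : R -> nat -> nat -> R.
Variable k : nat.
Definition mxA u : 'M[R]_k := \matrix_(i, j) M u i j.

Definition kerS u := exists v : nat -> R, (exists i, lt i k /\ v i <> 0) /\
   forall i, lt i k -> rsum k (fun j => Rmult (M u i j) (v j)) = 0.

Lemma ker_det u : kerS u <-> \det (mxA u) = 0.
Proof.
split.
- move=> [v [[i0 [hi0 nz]] hk]].
  pose cv : 'cV[R]_k := \col_j v j.
  have hA : mxA u *m cv = 0.
    apply/matrixP => i j; rewrite !mxE -[RHS](hk i); last by apply/ltP.
    rewrite rsum_big; apply: eq_bigr => l _; rewrite !mxE //.
  rewrite -det_tr; apply/eqP/det0P; exists cv^T.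
  + apply/eqP => h.
    have /ltP hi0' := hi0.
    have := congr1 (fun m : 'rV[R]_k => m 0 (Ordinal hi0')) h.
    by rewrite !mxE /=.
  + by rewrite -trmx_mul hA trmx0.
- move=> h; have /det0P [w wn0 hw] : \det (mxA u)^T == 0 by rewrite det_tr h.
  pose v := fun j : nat => \sum_(i < k) (if val i == j then w 0 i else 0).
  have hv : forall i : 'I_k, v i = w 0 i.
    move=> i; rewrite /v (bigD1 i) //= eqxx big1 ?addr0 // => l hl.
    by rewrite ifN.
  exists v; split.
  + case: (pickP (fun j => w 0 j != 0)) => [j hj | hn].
    * exists (val j); split; first by apply/ltP; exact: ltn_ord.
      by rewrite hv; apply/eqP.
    * exfalso; move/negP: wn0; apply; apply/eqP/rowP => j.
      by have := hn j; rewrite mxE => /negbFE/eqP.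
  + move=> i /ltP hi.
    have := congr1 (fun m : 'rV[R]_k => m 0 (Ordinal hi)) hw.
    rewrite !mxE => <-.
    rewrite rsum_big; apply: eq_bigr => l _; rewrite !mxE hv mulrC //.
Qed.

Hypothesis Hp : forall i j, ispolyS (fun u => M u i j).
Definition pol i j : {poly R} :=
  proj1_sig (constructive_indefinite_description _ (@ispoly_poly _ (Hp i j))).
Lemma polE i j u : M u i j = (pol i j).[u].
Proof. exact: (proj2_sig (constructive_indefinite_description _ (@ispoly_poly _ (Hp i j))) u). Qed.
Definition mxP : 'M[{poly R}]_k := \matrix_(i, j) pol i j.
Lemma det_horner u : \det (mxA u) = (\det mxP).[u].
Proof.
have -> : (\det mxP).[u] = horner_eval u (\det mxP) by [].
rewrite -det_map_mx; congr (\det _).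
by apply/matrixP => i j; rewrite !mxE polE.
Qed.
End Det.

Local Open Scope ring_scope.
Lemma det_sing k (M : R -> nat -> nat -> R) a b :
  (forall i j, ispolyS (fun u => M u i j)) -> Rlt a b ->
  (forall u, Rlt a u -> Rlt u b -> kerS M k u) -> forall u, kerS M k u.
Proof.
move=> Hp ab h u; apply/ker_det; rewrite (@det_horner M k Hp).
have -> : \det (@mxP M k Hp) = GRing.zero.
  apply: (@poly_interval _ a b ab) => w aw wb.
  by rewrite -(@det_horner M k Hp); apply/ker_det; apply: h.
by rewrite horner0.
Qed.

Lemma ispoly_vanish f a b : ispolyS f -> Rlt a b ->
  (forall u, Rlt a u -> Rlt u b -> f u = 0) -> forall u, f u = 0.
Proof.
move=> hf ab h u; have [p hp] := @ispoly_poly f hf.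
rewrite hp. have -> : p = GRing.zero.
  by apply: (@poly_interval _ a b ab) => w aw wb; rewrite -hp; apply: h.
by rewrite horner0.
Qed.
End MC.

Lemma reps_exist n m a : (1 <= n)%nat -> (2 <= m)%nat ->
  exists c0 c1 c2, rep n (2 * m) (F0 n m a) c0 /\ rep n (2 * m) (F1 m a) c1 /\ rep n (2 * m) (F2 m a) c2.
Proof. intros Hn Hm.
 destruct (rep_shift n (2 * m) 0 (a 0%nat) 4 ltac:(lia) ltac:(lia)) as [e4 He4].
 destruct (rep_sum n (2 * m) (fun i x => (x i - a i) ^ (2 * m)) n) as [es Hes].
 { intros i Hi. apply rep_shift; lia. }
 destruct (rep_shift n (2 * m) 0 (a 0%nat) 2 ltac:(lia) ltac:(lia)) as [e2 He2].
 destruct (rep_shift n (2 * m) 0 (a 0%nat) (2 * m - 2) ltac:(lia) ltac:(lia)) as [e2' He2'].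
 destruct (rep_shift n (2 * m) 0 (a 0%nat) 0 ltac:(lia) ltac:(lia)) as [e0 He0].
 destruct (rep_shift n (2 * m) 0 (a 0%nat) (2 * m - 4) ltac:(lia) ltac:(lia)) as [e4' He4'].
 exists (fun j => e4 j + es j), (fun j => -2 * (e2 j + e2' j)), (fun j => e0 j + e4' j).
 split; [|split].
 - eapply rep_ext. apply rep_plus; eauto. intros x; unfold F0, y0, Ssum; reflexivity.
 - eapply rep_ext. apply rep_scal, rep_plus; eauto. intros x; unfold F1, y0. replace (2 * m - 2)%nat with (2 * m - 2)%nat by lia. reflexivity.
 - eapply rep_ext. apply rep_plus; eauto. intros x; unfold F2, y0. simpl. reflexivity.
Qed.

Lemma cont_eps f x : continuity_pt f x -> forall eps, 0 < eps ->
  exists del, 0 < del /\ forall y, Rabs (y - x) < del -> Rabs (f y - f x) < eps.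
Proof. intros H eps He. destruct (H eps He) as [del [Hd Hf]]. exists del. split; auto.
 intros y Hy. destruct (Req_dec y x) as [->|Hne]. rewrite Rminus_diag, Rabs_R0; auto.
 apply Hf. split. split; auto. exact I. auto. Qed.

Theorem mainTheorem14 (n d : nat) (K : (nat -> R) -> Prop) :
  (1 <= n)%nat ->
  semialgebraic n K ->
  (exists x, interiorR n K x) ->
  Nat.Even d -> (2 < d)%nat ->
  (* no polynomial phi in the coefficients: > 0 on int P_d(K), = 0 on ∂P_d(K) *)
  (~ exists phi : mpoly, mp_in_vars (dimP n d) phi /\
       (forall c, interiorR (dimP n d) (Pd n d K) c -> 0 < mp_eval phi c) /\
       (forall c, boundaryR (dimP n d) (Pd n d K) c -> mp_eval phi c = 0)) /\
  (* hence -log phi is never a barrier for P_d(K) with phi polynomial *)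
  (~ exists phi : mpoly, mp_in_vars (dimP n d) phi /\
       (forall c, interiorR (dimP n d) (Pd n d K) c -> 0 < mp_eval phi c) /\
       is_barrier (dimP n d) (Pd n d K) (fun c => - ln (mp_eval phi c))) /\
  (* and P_d(K) is not LMI-representable *)
  ~ LMI_representable (dimP n d) (Pd n d K).
Proof.
 intros Hn _ [a [r [Hr HK]]] [m Hd] Hd2. subst d.
 assert (Hm : (2 <= m)%nat) by lia.
 destruct (reps_exist n m a Hn Hm) as [c0 [c1 [c2 [H0 [H1 H2]]]]].
 set (gm := gam c0 c1 c2).
 assert (Hbd : forall u, 0 < u < r ^ 2 -> boundaryR (dimP n (2 * m)) (Pd n (2 * m) K) (gm u))
   by (intros; eapply gam_boundary; eauto).
 assert (Hint : interiorR (dimP n (2 * m)) (Pd n (2 * m) K) (gm (-1))) by (eapply gam_int; eauto).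
 assert (Hr2 : 0 < r ^ 2) by (apply pow_lt; lra).
 assert (Hisp : forall j, ispolyS (fun u => gm u j)) by (intros; apply gam_isp).
 assert (Core : forall phi : mpoly, (forall u, 0 < u < r ^ 2 -> mp_eval phi (gm u) = 0) ->
           mp_eval phi (gm (-1)) = 0).
 { intros phi Hz. apply (MC.ispoly_vanish (fun u => mp_eval phi (gm u)) 0 (r ^ 2));
   [apply isp_mp; auto | auto | intros u Hu1 Hu2; apply Hz; lra]. }
 split; [|split].
 - intros [phi [_ [Hi Hb]]].
   pose proof (Core phi (fun u Hu => Hb _ (Hbd u Hu))). pose proof (Hi _ Hint). lra.
 - intros [phi [_ [Hi Hbar]]].
   assert (Hz : forall u, 0 < u < r ^ 2 -> mp_eval phi (gm u) = 0).
   { intros u Hu.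
     set (g := fun t => mp_eval phi (fun j => gm u j + t * gm (-1) j)).
     assert (Hg : forall t, 0 < t -> 0 < g t).
     { intros t Ht. apply Hi. eapply int_comb; eauto. intros x. unfold gm. erewrite gam_G; eauto. eapply G_nonneg; eauto. }
     assert (Hgc : continuity_pt g 0).
     { apply isp_cont. apply isp_mp. intros j. apply isp_plus. apply isp_const. apply isp_mult. apply isp_id. apply isp_const. }
     assert (Hg0 : g 0 = mp_eval phi (gm u)).
     { unfold g. f_equal. apply functional_extensionality; intros; ring. }
     rewrite <- Hg0.
     destruct (Rtotal_order (g 0) 0) as [Hlt|[Heq|Hgt]]; auto; exfalso.
     + destruct (cont_eps g 0 Hgc (- g 0) ltac:(lra)) as [del [Hdel Hc]].
       specialize (Hc (del / 2) ltac:(rewrite Rminus_0_r, Rabs_right; lra)).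
       specialize (Hg (del / 2) ltac:(lra)). apply Rabs_def2 in Hc. lra.
     + destruct (Hbar (gm u) (Hbd u Hu) (- ln (g 0 / 2))) as [r' [Hr' Hball]].
       destruct (cont_eps g 0 Hgc (g 0 / 2) ltac:(lra)) as [del [Hdel Hc]].
       set (Bg := 1 + rsum (dimP n (2 * m)) (fun j => Rabs (gm (-1) j))).
       assert (HBg : 1 <= Bg).
       { unfold Bg. assert (0 <= rsum (dimP n (2 * m)) (fun j => Rabs (gm (-1) j))) by (apply rsum_nonneg; intros; apply Rabs_pos). lra. }
       set (t := Rmin (del / 2) (r' / (2 * Bg))).
       assert (Ht : 0 < t) by (apply Rmin_glb_lt; [lra| apply Rdiv_lt_0_compat; lra]).
       assert (Ht1 : t <= del / 2) by apply Rmin_l.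
       assert (Ht2 : t <= r' / (2 * Bg)) by apply Rmin_r.
       assert (Hin : interiorR (dimP n (2 * m)) (Pd n (2 * m) K) (fun j => gm u j + t * gm (-1) j)).
       { eapply int_comb; eauto. intros x. unfold gm. erewrite gam_G; eauto. eapply G_nonneg; eauto. }
       assert (Hb : ballR (dimP n (2 * m)) (gm u) r' (fun j => gm u j + t * gm (-1) j)).
       { intros j Hj. replace (gm u j + t * gm (-1) j - gm u j) with (t * gm (-1) j) by ring.
         rewrite Rabs_mult, (Rabs_right t) by lra.
         assert (Rabs (gm (-1) j) <= Bg).
         { unfold Bg. pose proof (rsum_term_le _ (fun j => Rabs (gm (-1) j)) j ltac:(intros; apply Rabs_pos) Hj) as Ht3. cbv beta in Ht3. lra. }
         assert (t * Rabs (gm (-1) j) <= r' / (2 * Bg) * Bg) by (apply Rmult_le_compat; auto; [lra|apply Rabs_pos]).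
         assert (E : r' / (2 * Bg) * Bg = r' / 2) by (field; lra). lra. }
       specialize (Hball _ Hb Hin). fold (g t) in Hball.
       assert (Hgt' : 0 < g t) by auto.
       assert (g t < g 0 / 2).
       { apply ln_lt_inv; auto. lra. lra. }
       specialize (Hc t ltac:(rewrite Rminus_0_r, Rabs_right; lra)). apply Rabs_def2 in Hc. lra. }
   pose proof (Core phi Hz). pose proof (Hi _ Hint). lra.
 - intros [k [A [Hsym [Hiff Hpd]]]].
   set (L := fun u i j => pencil (dimP n (2 * m)) A (gm u) i j).
   assert (Lsym : forall u i j, (i < k)%nat -> (j < k)%nat -> L u i j = L u j i).
   { intros u i j Hi Hj. unfold L, pencil. rewrite Hsym by auto. f_equal. apply rsum_ext; intros; rewrite Hsym; auto. }
   assert (Lisp : forall i j, ispolyS (fun u => L u i j)).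
   { intros i j. unfold L, pencil. apply isp_plus. apply isp_const. apply isp_rsum. intros l. apply isp_mult; auto. apply isp_const. }
   assert (Hker : forall u, 0 < u -> u < r ^ 2 -> MC.kerS L k u).
   { intros u Hu1 Hu2.
     assert (Hps : psd k (L u)) by (apply Hiff; unfold gm; eapply gam_Pd; eauto).
     assert (Hnpd : ~ pd k (L u)).
     { intros Hp. destruct (pencil_open _ A (gm u) k Hp) as [eps [He Hop]].
       apply (proj2 (Hbd u (conj Hu1 Hu2))). exists eps. split; auto.
       intros yv Hy. apply Hiff. apply Hop. intros l Hl. specialize (Hy l Hl). auto. }
     unfold pd in Hnpd. apply not_all_ex_not in Hnpd. destruct Hnpd as [v Hv].
     apply imply_to_and in Hv. destruct Hv as [Hnz Hq].
     assert (Hq0 : quad_form k (L u) v = 0) by (pose proof (Hps v); lra).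
     exists v. split; auto. intros i Hi. apply (psd_null k (L u) v); auto. }
   destruct (MC.det_sing k L 0 (r ^ 2) Lisp Hr2 Hker (-1)) as [v [Hnz Hv]].
   assert (Hq : quad_form k (L (-1)) v = 0).
   { unfold quad_form. rewrite (rsum_ext k _ (fun _ => 0)). apply rsum_zero.
     intros i Hi. rewrite (rsum_ext k _ (fun j => v i * (L (-1) i j * v j))) by (intros; ring).
     rewrite rsum_scal. replace (rsum k (fun j => L (-1) i j * v j)) with 0 by (symmetry; exact (Hv i Hi)). ring. }
   assert (Hp1 : 0 < quad_form k (pencil (dimP n (2 * m)) A (gm (-1))) v).
   { apply (Hpd _ Hint). destruct Hnz as [i [Hi Hvi]]. exists i. split; auto. }
   change (quad_form k (pencil (dimP n (2 * m)) A (gm (-1))) v = 0) in Hq. lra.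
Qed.
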